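(* Let $\varepsilon>0$, $0<\kappa<1$, $M\ge0$, and let $\{a_n\}_{n=1}^\infty$, $\{b_n\}_{n=1}^\infty$ be sequences of positive integers with $\{a_n\}$ non-decreasing, $\limsup_{n\to\infty}a_n^{(M+2)^{-n}}=\infty$, and $a_n\ge n^{1+\varepsilon}$, $b_n\le 2^{(\log_2 a_n)^\kappa}$ for all sufficiently large $n$. Let $k$ be a positive integer. Then for infinitely many $N>k$, \[a_N>\Big(1+\frac1{N^2}\Big)^{(M+2)^N}\Big(\max_{k\le n<N}a_n^{(M+2)^{-n}}\Big)^{(M+2)^N},\] and for every such $N$ we further have \[a_N>\Big(1+\frac1{N^2}\Big)^{(M+2)^N}\prod_{n=k}^{N-1}a_n^{M+1}.\] *)

(* Defs.v *)
From Stdlib Require Import Reals List.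
From Coquelicot Require Import Coquelicot.
Open Scope R_scope.

Definition log2 (x : R) : R := ln x / ln 2.

(* max_{k <= n < N} f n  (values used here are positive; default 0 for empty range) *)
Definition max_range (f : nat -> R) (k N : nat) : R :=
  fold_right Rmax 0 (map f (seq k (N - k))).

Definition prod_range (f : nat -> R) (k N : nat) : R :=
  fold_right Rmult 1 (map f (seq k (N - k))).

(* Main.v *)
Require Import Defs.
From Stdlib Require Import Reals List.
From Coquelicot Require Import Coquelicot.
From Stdlib Require Import Lra Lia Classical.
Open Scope R_scope.

Lemma fold_max_ge l x : In x l -> x <= fold_right Rmax 0 l.
Proof.
  induction l as [|y l IH]; simpl; [tauto|].
  intros [->|H]; [apply Rmax_l|]. eapply Rle_trans; [apply IH, H|apply Rmax_r].
Qed.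

Lemma fold_max_le l B : 0 <= B -> (forall x, In x l -> x <= B) -> fold_right Rmax 0 l <= B.
Proof.
  intros HB; induction l as [|y l IH]; simpl; intros H; [lra|].
  apply Rmax_lub; auto.
Qed.

Lemma in_range (f : nat -> R) k N n : (k <= n < N)%nat -> In (f n) (map f (seq k (N - k))).
Proof. intros H; apply in_map, in_seq; lia. Qed.

Lemma max_range_ge f k N n : (k <= n < N)%nat -> f n <= max_range f k N.
Proof. intros H; apply fold_max_ge, in_range, H. Qed.

Lemma max_range_le f k N B : 0 <= B -> (forall n, (k <= n < N)%nat -> f n <= B) -> max_range f k N <= B.
Proof.
  intros HB H; apply fold_max_le; auto.
  intros x Hx; apply in_map_iff in Hx as [n [<- Hn]]; apply in_seq in Hn; apply H; lia.
Qed.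

Lemma Rpower_pos x y : 0 < Rpower x y.
Proof. apply exp_pos. Qed.

Lemma prod_bound (q X : R) (f : nat -> R) (L : nat -> R) :
  1 < q -> 0 < X ->
  (forall n, f n = exp ((q - 1) * L n)) ->
  forall d k, (forall n, (k <= n < k + d)%nat -> L n <= q ^ n * ln X) ->
  0 < fold_right Rmult 1 (map f (seq k d)) /\
  fold_right Rmult 1 (map f (seq k d)) <= exp ((q ^ (k + d) - q ^ k) * ln X).
Proof.
  intros Hq HX Hf d; induction d as [|d IH]; intros k H; simpl.
  - rewrite Nat.add_0_r. replace ((q ^ k - q ^ k) * ln X) with 0 by ring. rewrite exp_0; lra.
  - destruct (IH (S k)) as [H1 H2]. { intros n Hn; apply H; lia. }
    rewrite Hf. split. { apply Rmult_lt_0_compat; [apply exp_pos|exact H1]. }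
    replace ((q ^ (k + S d) - q ^ k) * ln X) with
      ((q - 1) * (q ^ k * ln X) + (q ^ (S k + d) - q ^ (S k)) * ln X).
    2:{ replace (k + S d)%nat with (S k + d)%nat by lia. simpl. ring. }
    rewrite exp_plus. apply Rmult_le_compat; try (left; apply exp_pos); try lra.
    + destruct (Rle_lt_or_eq_dec _ _ (Rmult_le_compat_l (q - 1) _ _ ltac:(lra) (H k ltac:(lia)))) as [h|h].
      * left; apply exp_increasing; exact h.
      * rewrite h; lra.
Qed.

Lemma key_ineq x : 3 <= x -> (1 + / x ^ 2) * (1 - / (x - 1)) <= 1 - / x.
Proof.
  intros Hx.
  assert (E : 1 - / x - (1 + / x ^ 2) * (1 - / (x - 1)) = 2 / (x ^ 2 * (x - 1))).
  { field; lra. }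
  assert (0 < 2 / (x ^ 2 * (x - 1))).
  { apply Rdiv_lt_0_compat; [lra|]. apply Rmult_lt_0_compat; [|lra]. nra. }
  lra.
Qed.

Theorem corollary1 (eps kappa M : R) (a b : nat -> nat) (k : nat)
  (Heps : 0 < eps) (Hkappa0 : 0 < kappa) (Hkappa1 : kappa < 1) (HM : 0 <= M)
  (Hapos : forall n, (1 <= n)%nat -> (0 < a n)%nat)
  (Hbpos : forall n, (1 <= n)%nat -> (0 < b n)%nat)
  (Hmono : forall n m, (1 <= n)%nat -> (n <= m)%nat -> (a n <= a m)%nat)
  (Hlimsup : LimSup_seq (fun n => Rpower (INR (a n)) (/ (M + 2) ^ n)) = p_infty)
  (Hgrowth : exists n0, forall n, (n0 <= n)%nat ->
      Rpower (INR n) (1 + eps) <= INR (a n) /\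
      INR (b n) <= Rpower 2 (Rpower (log2 (INR (a n))) kappa))
  (Hk : (1 <= k)%nat) :
  let P1 := fun N : nat =>
    INR (a N) > Rpower (1 + / INR N ^ 2) ((M + 2) ^ N) *
      Rpower (max_range (fun n => Rpower (INR (a n)) (/ (M + 2) ^ n)) k N) ((M + 2) ^ N) in
  (forall m : nat, exists N : nat, (m < N)%nat /\ (k < N)%nat /\ P1 N) /\
  (forall N : nat, (k < N)%nat -> P1 N ->
     INR (a N) > Rpower (1 + / INR N ^ 2) ((M + 2) ^ N) *
       prod_range (fun n => Rpower (INR (a n)) (M + 1)) k N).
Proof.
  intros P1. subst P1. cbv beta.
  set (q := M + 2).
  set (c := fun n => Rpower (INR (a n)) (/ q ^ n)).
  fold c.
  assert (Hq : 1 < q) by (unfold q; lra).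
  assert (Hqn : forall n, 0 < q ^ n) by (intros; apply pow_lt; lra).
  assert (Hcpos : forall n, 0 < c n) by (intros; apply Rpower_pos).
  assert (Hapos' : forall n, (1 <= n)%nat -> 1 <= INR (a n)).
  { intros n Hn. apply (le_INR 1). apply Hapos; exact Hn. }
  assert (HmxC : forall N n, (k <= n < N)%nat -> c n <= max_range c k N)
    by (intros; apply max_range_ge; auto).
  assert (Hmxpos : forall N, (k < N)%nat -> 0 < max_range c k N).
  { intros N HN. eapply Rlt_le_trans; [apply (Hcpos k)|apply HmxC; lia]. }
  split.
  - intros m.
    destruct (classic (exists N, (m < N)%nat /\ (k < N)%nat /\
       INR (a N) > Rpower (1 + / INR N ^ 2) (q ^ N) * Rpower (max_range c k N) (q ^ N)))
      as [Hex|Hno]; [exact Hex|exfalso].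
    set (N1 := S (Nat.max m (Nat.max k 2))).
    assert (HN1n : (3 <= N1 /\ k < N1 /\ m < N1)%nat) by (unfold N1; lia).
    clearbody N1.
    assert (Hstep : forall N, (N1 <= N)%nat -> c N <= (1 + / INR N ^ 2) * max_range c k N).
    { intros N HN.
      assert (HNk : (k < N)%nat) by lia.
      assert (HNpos : 0 < INR N) by (apply lt_0_INR; lia).
      assert (HA : 0 < 1 + / INR N ^ 2).
      { assert (0 < / INR N ^ 2) by (apply Rinv_0_lt_compat, pow_lt; lra). lra. }
      assert (Hle : INR (a N) <= Rpower ((1 + / INR N ^ 2) * max_range c k N) (q ^ N)).
      { rewrite <- Rpower_mult_distr; [|exact HA|apply Hmxpos; exact HNk].
        apply Rnot_lt_le. intros Hlt. apply Hno. exists N. repeat split; try lia. exact Hlt. }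
      unfold c at 1.
      eapply Rle_trans.
      { apply Rle_Rpower_l; [left; apply Rinv_0_lt_compat, Hqn|split; [|exact Hle]].
        specialize (Hapos' N ltac:(lia)). lra. }
      rewrite Rpower_mult. rewrite Rinv_r; [|apply Rgt_not_eq, Hqn].
      apply Req_le, Rpower_1. apply Rmult_lt_0_compat; [exact HA|apply Hmxpos; exact HNk]. }
    set (G := fun N : nat => 1 - / (INR N - 1)).
    assert (HN1 : 3 <= INR N1).
    { replace 3 with (INR 3) by (simpl; lra). apply le_INR. lia. }
    assert (HG : forall N, (N1 <= N)%nat -> 0 < G N <= 1 /\ G N <= G (S N)
              /\ (1 + / INR N ^ 2) * G N <= G (S N)).
    { intros N HN. assert (H3 : 3 <= INR N) by (apply Rle_trans with (INR N1); [lra|apply le_INR; lia]).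
      unfold G. rewrite S_INR.
      replace (INR N + 1 - 1) with (INR N) by ring.
      assert (h1 : 0 < / (INR N - 1) <= / 2).
      { split; [apply Rinv_0_lt_compat; lra|apply Rinv_le_contravar; lra]. }
      assert (h2 : / INR N <= / (INR N - 1)) by (apply Rinv_le_contravar; lra).
      assert (h3 : 0 < / INR N) by (apply Rinv_0_lt_compat; lra).
      pose proof (key_ineq (INR N) H3).
      repeat split; lra. }
    set (B := max_range c k N1 / G N1).
    assert (HB : 0 <= B).
    { unfold B. left; apply Rdiv_lt_0_compat; [apply Hmxpos; lia|apply HG; lia]. }
    assert (Hinv : forall j n, (k <= n < N1 + j)%nat -> c n <= B * G (N1 + j)%nat).
    { induction j as [|j IH]; intros n Hn.
      - rewrite Nat.add_0_r. unfold B. unfold Rdiv. rewrite Rmult_assoc, Rinv_l.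
        + rewrite Rmult_1_r. apply HmxC; lia.
        + apply Rgt_not_eq, HG; lia.
      - replace (N1 + S j)%nat with (S (N1 + j)) in * by lia.
        destruct (HG (N1 + j)%nat ltac:(lia)) as [[g0 g1] [g2 g3]].
        destruct (Nat.eq_dec n (N1 + j)) as [->|Hne].
        + eapply Rle_trans; [apply Hstep; lia|].
          eapply Rle_trans.
          { apply Rmult_le_compat_l.
            - assert (0 < / INR (N1 + j) ^ 2).
              { apply Rinv_0_lt_compat, pow_lt, lt_0_INR; lia. } lra.
            - apply (max_range_le _ _ _ (B * G (N1 + j)%nat)); [apply Rmult_le_pos; lra|]. intros; apply IH; lia. }
          replace ((1 + / INR (N1 + j) ^ 2) * (B * G (N1 + j)%nat))
            with (B * ((1 + / INR (N1 + j) ^ 2) * G (N1 + j)%nat)) by ring.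
          apply Rmult_le_compat_l; lra.
        + eapply Rle_trans; [apply IH; lia|]. apply Rmult_le_compat_l; lra. }
    assert (Hbd : forall n, (N1 <= n)%nat -> c n <= B).
    { intros n Hn. eapply Rle_trans; [apply (Hinv (S n - N1)%nat); lia|].
      destruct (HG (N1 + (S n - N1))%nat ltac:(lia)) as [[g0 g1] _].
      rewrite <- (Rmult_1_r B) at 2. apply Rmult_le_compat_l; lra. }
    assert (HL : Rbar_le (LimSup_seq c) (LimSup_seq (fun _ => B))).
    { apply LimSup_le. exists N1. exact Hbd. }
    unfold c, q in HL. rewrite Hlimsup, LimSup_seq_const in HL. simpl in HL. exact HL.
  - intros N HN HP1.
    set (X := max_range c k N) in *.
    assert (HX1 : 1 <= X).
    { apply Rle_trans with (c k); [|apply HmxC; lia].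
      unfold c, Rpower. eapply Rle_trans; [|apply exp_ineq1_le].
      assert (0 <= / q ^ k * ln (INR (a k))).
      { apply Rmult_le_pos; [left; apply Rinv_0_lt_compat, Hqn|].
        rewrite <- ln_1. apply ln_le; [lra|apply Hapos'; exact Hk]. }
      lra. }
    destruct (prod_bound q X (fun n => Rpower (INR (a n)) (M + 1)) (fun n => ln (INR (a n)))
                Hq ltac:(lra) ltac:(intros n; unfold Rpower, q; f_equal; ring) (N - k) k)
      as [_ Hpb].
    { intros n Hn.
      assert (Hc : ln (c n) <= ln X) by (apply ln_le; [apply Hcpos|apply HmxC; lia]).
      unfold c, Rpower in Hc. rewrite ln_exp in Hc.
      apply Rmult_le_compat_l with (r := q ^ n) in Hc; [|left; apply Hqn].
      rewrite <- Rmult_assoc, Rinv_r, Rmult_1_l in Hc; [exact Hc|apply Rgt_not_eq, Hqn]. }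
    replace (k + (N - k))%nat with N in Hpb by lia.
    unfold prod_range. unfold Rgt in *.
    eapply Rle_lt_trans; [|exact HP1].
    apply Rmult_le_compat_l; [left; apply Rpower_pos|].
    eapply Rle_trans; [exact Hpb|].
    unfold Rpower.
    assert (0 < ln X \/ ln X = 0) as [h|h].
    { destruct HX1 as [h|h]; [left; rewrite <- ln_1; apply ln_increasing; lra|right; rewrite <- h; apply ln_1]. }
    + left. apply exp_increasing. pose proof (Hqn k). nra.
    + rewrite h. apply Req_le. f_equal. ring.
Qed.
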